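(* Let $F$ be the uniform distribution on $[0,1]$, $d\ge2$, and let $G$ be a $d$-regular bipartite graph with $n/2$ vertices $L$ on one side and $n/2$ vertices $R$ on the other. Then: (i) the vector with $T_i=1/2$ for $i\in L$ and $T_i=2^{d-1}$ for $i\in R$ lies in $\mathcal{N}_{(1/2)\cdot\mathbf{1}}$ and has revenue $n/8$; (ii) for every uniform price $p'>0$, $\inf_{\mathbf{T}\in\mathcal{N}_{p'\cdot\mathbf{1}}}\mathcal{R}(p'\cdot\mathbf{1},\mathbf{T})\le n/d$; hence the ratio between the best equilibrium revenue and the best worst-case uniform-price revenue can be at least $d/8$; (iii) for the non-uniform price vector with $p_i=1/2$ for $i\in L$ and $p_i=1$ for $i\in R$, the equilibrium set consists of a single equilibrium (up to thresholds above $1$ for buyers in $R$, which never buy), with revenue $n/8$.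
   Context: Public-goods pricing game: $n$ buyers are the vertices of an undirected graph $G=([n],E)$; $N(i)=\{j:(i,j)\in E\}$ (so $i\notin N(i)$). Values i.i.d. with cumulative distribution function $F$; for the uniform distribution $F(x)=\min\{1,x\}$ for $x\ge0$, $F(\infty)=1$. An equilibrium for price vector $\mathbf{p}$ is $\mathbf{T}\in[0,\infty]^n$ (buyer $i$ purchases iff $v_i\ge T_i$) with $T_i=p_i/\prod_{j\in N(i)}F(T_j)$ for all $i$; $\mathcal{N}_{\mathbf{p}}$ is the set of equilibria; $\mathcal{R}(\mathbf{p},\mathbf{T})=\sum_ip_i(1-F(T_i))$; $p\cdot\mathbf{1}$ is the uniform price vector. *)

(* Defs.v *)
From HB Require Import structures.
From mathcomp Require Import all_boot all_order all_algebra.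
Set Implicit Arguments. Unset Strict Implicit. Unset Printing Implicit Defensive.
Import Order.TTheory GRing.Theory Num.Theory.
Local Open Scope ring_scope.

(* Thresholds live in [0, oo]: [Some x] is the finite threshold x, [None] is oo. *)
Definition ext (R : rcfType) := option R.

Definition Funif (R : rcfType) (x : option R) : R :=
  if x is Some y then Num.max 0 (Num.min 1 y) else 1.

(* Division in [0, oo]: a / 0 = oo (only used with a > 0). *)
Definition ediv (R : rcfType) (a b : R) : option R :=
  if b == 0 then None else Some (a / b).

Definition is_equilibrium (R : rcfType) (n : nat) (e : rel 'I_n)
    (p : 'I_n -> R) (T : 'I_n -> option R) : Prop :=
  (forall i, if T i is Some x then 0 <= x else true) /\
  (forall i, T i = ediv (p i) (\prod_(j | e i j) Funif (T j))).

Definition revenue (R : rcfType) (n : nat) (p : 'I_n -> R) (T : 'I_n -> option R) : R :=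
  \sum_i p i * (1 - Funif (T i)).

(* Main.v *)
Require Import Defs.
From HB Require Import structures.
From mathcomp Require Import all_boot all_order all_algebra.
From mathcomp Require Import ring lra.
Import Order.TTheory GRing.Theory Num.Theory.
Local Open Scope ring_scope.

Lemma Funif01 (R : rcfType) t : (0:R) <= t <= 1 -> Funif (Some t) = t.
Proof. move=> /andP[h0 h1]; rewrite /Funif; rewrite (min_r h1) (max_r h0) //. Qed.
Lemma Funif1 (R : rcfType) (t:R) : 1 <= t -> Funif (Some t) = 1.
Proof. move=> h; rewrite /Funif (min_l h) max_r //. Qed.
Lemma Funif_b (R : rcfType) (x : option R) : 0 <= Funif x <= 1.
Proof. case: x => [y|] /=; last by rewrite ler01 lexx.
rewrite le_max lexx /= ge_max ler01 /= ge_min lexx //. Qed.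

Lemma prod_cst (R : rcfType) n (e : rel 'I_n) i (c : R) :
  \prod_(j | e i j) c = c ^+ #|[set j | e i j]|.
Proof. rewrite -prodr_const; apply: eq_bigl => j; by rewrite inE. Qed.

Lemma bern (R : rcfType) (t : R) k : 0 <= t <= 1 -> k%:R * t ^+ k * (1 - t) <= 1 - t ^+ k.
Proof.
move=> /andP[h0 h1]; elim: k => [|k IH]; first by rewrite mul0r mul0r expr0 subrr.
have hk : 0 <= t ^+ k by rewrite exprn_ge0.
have hk1 : t ^+ k <= 1 by rewrite exprn_ile1.
rewrite !exprS -natr1.
move: IH hk hk1; set u := t ^+ k; set K : R := k%:R => IH hk hk1.
have A : t * (K * u * (1 - t)) <= t * (1 - u) by rewrite ler_wpM2l.
have B : 0 <= (1 - t) * (1 - t * u).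
  apply: mulr_ge0; rewrite subr_ge0 //. by rewrite mulr_ile1.
nra.
Qed.

Lemma rev_helper (R : rcfType) n (L : {set 'I_n}) (p : 'I_n -> R) T :
  (forall i, i \in L -> p i * (1 - Funif (T i)) = 1/4) ->
  (forall i, i \notin L -> Funif (T i) = 1) -> #|L| = #|~:L| ->
  revenue p T = n%:R / 8.
Proof.
move=> hL hR hc; rewrite /revenue (bigID (fun i => i \in L)) /=.
rewrite [X in _ + X]big1 ?addr0; last first.
  by move=> i hi; rewrite (hR i hi) subrr mulr0.
rewrite (eq_bigr (fun _ => 1/4)) //.
rewrite sumr_const.
have hn : (n%:R : R) = #|L|%:R + #|L|%:R.
  by rewrite -natrD {2}hc cardsC card_ord.
by rewrite hn -mulr_natr; field.
Qed.

Lemma half_pow (R : rcfType) d : ((1/2 : R) ^+ d) = (2 ^+ d)^-1.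
Proof. by rewrite div1r exprVn. Qed.

Theorem mainTheorem11 (R : rcfType) (n d : nat) (e : rel 'I_n) (L : {set 'I_n}) :
  (2 <= d)%N ->
  symmetric e -> irreflexive e ->
  (forall i j, e i j -> (i \in L) = (j \notin L)) ->
  (forall i, #|[set j | e i j]| = d) ->
  #|L| = #|~: L| ->
  (* (i) *)
  (let T1 := fun i : 'I_n => if i \in L then Some (1 / 2 : R) else Some (2 ^+ d.-1 : R) in
   is_equilibrium e (fun _ => 1 / 2) T1 /\
   revenue (fun _ => 1 / 2) T1 = n%:R / 8)
  /\
  (* (ii): inf over equilibria of the revenue is <= n/d *)
  (forall p' : R, 0 < p' -> forall eps : R, 0 < eps ->
     exists T, is_equilibrium e (fun _ => p') T /\
               revenue (fun _ => p') T <= n%:R / d%:R + eps)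
  /\
  (* (iii) *)
  (let p := fun i : 'I_n => if i \in L then (1 / 2 : R) else 1 in
   (exists T, is_equilibrium e p T) /\
   (forall T, is_equilibrium e p T ->
      (forall i, i \in L -> T i = Some (1 / 2)) /\
      (forall i, i \notin L -> Funif (T i) = 1) /\
      revenue p T = n%:R / 8)).
Proof.
move=> hd hsym hirr hbip hdeg hc.
have h2 : (0 : R) < 2 by [].
have F12 : Funif (Some (1/2 : R)) = 1/2.
  by rewrite Funif01 // divr_ge0 //= ler_pdivrMr // mul1r ler1n.
have pow1 : forall k, (1 : R) <= 2 ^+ k by move=> k; rewrite exprn_ege1 // ler1n.
have pow0 : forall k, (2 : R) ^+ k != 0 by move=> k; rewrite expf_neq0 // pnatr_eq0.
have nbL : forall i j, i \in L -> e i j -> j \notin L by move=> i j hi /hbip; rewrite hi.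
have nbR : forall i j, i \notin L -> e i j -> j \in L.
  by move=> i j hi /hbip; rewrite (negbTE hi) => /esym /negbFE.
split.
  move=> T1; split; last first.
    apply: rev_helper; last exact: hc.
      by move=> i; rewrite /T1 => ->; rewrite F12; field.
    by move=> i; rewrite /T1 => /negbTE ->; rewrite Funif1.
  split.
    move=> i; rewrite /T1; case: (i \in L) => //.
      by rewrite divr_ge0 // ler0n.
    by rewrite exprn_ge0 // ler0n.
  move=> i; rewrite /T1; case: ifP => hi.
    rewrite big1 ?/ediv ?oner_eq0 ?divr1 // => j /(nbL _ _ hi) /negbTE ->.
    by rewrite Funif1.
  rewrite (eq_bigr (fun _ => 1/2)); last first.
    by move=> j /(nbR _ _ (negbT hi)) ->.
  rewrite prod_cst hdeg /ediv half_pow invr_eq0 (negbTE (pow0 _)).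
  have hdS : d = d.-1.+1 by rewrite prednK // ltnW.
  rewrite [in X in Some (_ / X)]hdS exprS; congr Some; field.
  by rewrite pow0.
split.
  move=> p' hp eps heps.
  have hd0 : (0 : R) < d%:R by rewrite ltr0n; case: d hd {hdeg}.
  have rhs0 : 0 <= (n%:R : R) / d%:R + eps.
    by apply: addr_ge0; [apply: divr_ge0; apply: ler0n | exact: ltW].
  have [hp1|hp1] := leP 1 p'.
    exists (fun _ => Some p'); split.
      split=> [i|i]; first exact: ltW.
      by rewrite big1 ?/ediv ?oner_eq0 ?divr1 // => j _; rewrite Funif1.
    by rewrite /revenue big1 // => i _; rewrite Funif1 // subrr mulr0.
  have [t /andP[t0 t1] /rootP rt] :
      exists2 t, (0:R) <= t <= 1 & root ('X^(d.+1) - p'%:P) t.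
    apply: poly_ivt; first exact: ler01.
    rewrite !hornerE expr0n /= expr1n sub0r oppr_le0 subr_ge0 ltW //= ltW //.
  move: rt; rewrite !hornerE => /eqP; rewrite subr_eq0 => /eqP tp.
  have tn0 : t != 0 by apply/eqP => t0'; move: tp; rewrite t0' expr0n /= => h; move: hp; rewrite -h ltxx.
  have td0 : t ^+ d != 0 by rewrite expf_neq0.
  exists (fun _ => Some t); split.
    split=> [i|i] //.
    rewrite (eq_bigr (fun _ => t)); last by move=> j _; rewrite Funif01 ?t0.
    by rewrite prod_cst hdeg /ediv (negbTE td0) -tp exprS mulfK.
  rewrite /revenue (eq_bigr (fun _ => p' * (1 - t))); last by move=> i _; rewrite Funif01 ?t0.
  rewrite sumr_const card_ord -mulr_natl ?mulr1.
  have hb := @bern R t d (introT andP (conj t0 t1)).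
  have tdl : t ^+ d <= 1 by rewrite exprn_ile1.
  have td0' : 0 <= t ^+ d by rewrite exprn_ge0.
  have X1 : d%:R * (p' * (1 - t)) <= 1.
    rewrite -tp exprSr; nra.
  have X2 : p' * (1 - t) <= d%:R^-1.
    by rewrite -(ler_pM2l hd0) mulfV ?lt0r_neq0.
  have hn0 : (0:R) <= n%:R by rewrite ler0n.
  apply: (@le_trans _ _ (n%:R / d%:R)).
    by rewrite -[p' * (1 - t) *+ n]mulr_natl; exact: (ler_wpM2l hn0 X2).
  lra.
move=> p; split.
  exists (fun i => if i \in L then Some (1/2) else Some (2 ^+ d)); split.
    move=> i; case: (i \in L) => //.
      by rewrite divr_ge0 // ler0n.
    by rewrite exprn_ge0 // ler0n.
  move=> i; rewrite /p; case: ifP => hi.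
    rewrite big1 ?/ediv ?oner_eq0 ?divr1 // => j /(nbL _ _ hi) /negbTE ->.
    by rewrite Funif1.
  rewrite (eq_bigr (fun _ => 1/2)); last first.
    by move=> j /(nbR _ _ (negbT hi)) ->.
  by rewrite prod_cst hdeg /ediv half_pow invr_eq0 (negbTE (pow0 _)) div1r invrK.
move=> T [hnn heq].
have hR : forall i, i \notin L -> Funif (T i) = 1.
  move=> i hi; rewrite heq /p (negbTE hi) /ediv.
  set P := \prod_(j | e i j) _.
  have P0 : 0 <= P by apply: prodr_ge0 => j _; case/andP: (@Funif_b R (T j)).
  have P1 : P <= 1 by apply: prodr_ile1 => j _; exact: (@Funif_b R (T j)).
  case: eqP => // /eqP Pn0; apply: Funif1.
  by rewrite div1r invf_ge1 // lt0r Pn0.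
have hL : forall i, i \in L -> T i = Some (1/2).
  move=> i hi; rewrite heq /p hi big1 ?/ediv ?oner_eq0 ?divr1 //.
  by move=> j /(nbL _ _ hi); exact: hR.
split => //; split => //.
apply: rev_helper; last exact: hc.
  by move=> i hi; rewrite /p hi hL // F12; field.
exact: hR.
Qed.
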